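(* Assume (A1) and (A2), and let $\alpha>0$ be arbitrary. Along every trajectory of the algorithm described in the context, for all $k\ge0$, $$V_\psi(k+1)-V_\psi(k)\le-\tfrac12\|\bm e_\psi(k)\|^2+\beta_{\psi\xi}\|\bm e_\xi(k)\|^2+\beta_{\psi x}\|\bm e_x(k)\|^2.$$
   Context: Game. $N$ coalitions; coalition $i$ has agents $i1,\dots,in_i$; $\mathcal V_i=\{i1,\dots,in_i\}$, $\mathcal V=\bigcup_i\mathcal V_i$, $n_{\mathrm{sum}}=\sum_in_i$; agents ordered lexicographically. Agent $ij$ has state $x_{ij}\in\mathbb{R}$; $\bm x_i=(x_{i1},\dots,x_{in_i})^T$, $\bm x=(\bm x_1^T,\dots,\bm x_N^T)^T$. Costs $f_{ij}:\mathbb{R}^{n_{\mathrm{sum}}}\to\mathbb{R}$, $f_i=\sum_jf_{ij}$. For $\bm y\in\mathbb{R}^N$, $g_i(\bm y)=f_i((y_1\mathbf 1_{n_1}^T,\dots,y_N\mathbf 1_{n_N}^T)^T)$, $\mathcal Q(\bm y)=(\partial g_i/\partial y_i(\bm y))_{i=1}^N$; $\bm y^*$ denotes the Nash equilibrium of the game $\min_{y_i}g_i(\bm y)$ (i.e. $\mathcal Q(\bm y^* )=0$ under convexity). Graph. Directed graph $\mathcal G=(\mathcal V,\mathcal E)$, $(pq,ij)\in\mathcal E$ meaning $ij$ receives from $pq$. $a_{ij}^{pq}=1$ if $(pq,ij)\in\mathcal E$, $pq\ne ij$, else $0$; $d_{ij}=\sum_{pq}a_{ij}^{pq}$; Laplacian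 $L$ with diagonal $d_{ij}$, off-diagonal $-a_{ij}^{pq}$. $\mathcal G_i$: subgraph induced on $\mathcal V_i$. $\mathcal N_{ij}^{\mathrm{in}}$, $\mathcal N_{ij}^{i\text{-in}}$, $\mathcal N_{ij}^{i\text{-out}}$: in-neighbors in $\mathcal G$, in-neighbors and out-neighbors in $\mathcal G_i$. Assumptions. (A1) $\mathcal G$ and every $\mathcal G_i$ are strongly connected. (A2) each $f_{ij}$ is convex, $C^2$, with $\nabla f_{ij}$ Lipschitz of constant $l_{ij}$. (A3) $\exists l>0$: $(\bm a-\bm b)^T(\mathcal Q(\bm a)-\mathcal Q(\bm b))\ge l\|\bm a-\bm b\|^2$ for all $\bm a,\bm b$. Algorithm. Weights $r_{ij}^{im}>0$ for $im\in\mathcal N_{ij}^{i\text{-in}}\cup\{ij\}$ summing to 1, $c_{im}^{ij}>0$ for $im\in\mathcal N_{ij}^{i\text{-out}}\cup\{ij\}$ summing to 1, other within-coalition weights $0$; $R_i=[r_{ij}^{im}]$, $C_i=[c_{ij}^{im}]$ ($j$ row, $m$ column). Step size $\alpha>0$. Initialization: $x_{ij}(0),\bm\xi_{ij}(0)\in\mathbb{R}^{n_{\mathrm{sum}}}$ arbitrary, $\psi_{ij}^{il}(0)=\frac{\partial f_{ij}}{\partial x_{il}}(\bm\xi_{ij}(0))$. For $k\ge0$: $x_{ij}(k+1)=\sum_mr_{ij}^{im}x_{im}(k)-\frac{\alpha}{n_i}\sum_{m=1}^{n_i}\psi_{ij}^{im}(k)$; $\xi_{ij}^{pq}(k+1)=\xi_{ij}^{pq}(k)-\frac1{d_{ij}+a_{ij}^{pq}}\big(\sum_{lm\in\mathcal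 N_{ij}^{\mathrm{in}}}(\xi_{ij}^{pq}(k)-\xi_{lm}^{pq}(k))+a_{ij}^{pq}(\xi_{ij}^{pq}(k)-x_{pq}(k))\big)$ for all $pq\in\mathcal V$; $\psi_{ij}^{il}(k+1)=\sum_mc_{ij}^{im}\psi_{im}^{il}(k)+\frac{\partial f_{ij}}{\partial x_{il}}(\bm\xi_{ij}(k+1))-\frac{\partial f_{ij}}{\partial x_{il}}(\bm\xi_{ij}(k))$. Auxiliary quantities. $u_i$: $u_i^TR_i=u_i^T$, $u_i^T\mathbf 1=n_i$; $v_i$: $C_iv_i=v_i$, $\mathbf 1^Tv_i=n_i$. $\bar C_i=C_i-\frac{v_i\mathbf 1^T}{n_i}$, $\bar I_{v_i}=I-\frac{v_i\mathbf 1^T}{n_i}$, $\bar R_i=R_i-\frac{\mathbf 1u_i^T}{n_i}$, $\bar I_{u_i}=I-\frac{\mathbf 1u_i^T}{n_i}$. $\Gamma$, $A_d$: diagonal $n_{\mathrm{sum}}^2\times n_{\mathrm{sum}}^2$ matrices with entries $\frac1{d_{ij}+a_{ij}^{pq}}$, $a_{ij}^{pq}$ indexed by $(ij,pq)$, $ij$ outer, $pq$ inner. $H=\Gamma(L\otimes I_{n_{\mathrm{sum}}}+A_d)$, $\mathcal M=I-H$. $W_{c_i},W_{R_i},W_{\mathcal M}$: symmetric positive definite solutions of $\bar C_i^TW\bar C_i-W=-I$, $\bar R_i^TW\bar R_i-W=-I$, $\mathcal M^TW\mathcal M-W=-I$. Spectral matrix norms. $\beta_{\psi\xi}=2\max_{i,j}\{(2\|\bar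 C_i^TW_{c_i}\bar I_{v_i}\|^2+\|\bar I_{v_i}^TW_{c_i}\bar I_{v_i}\|)l_{ij}^2\}\|H\|^2$, $\beta_{\psi x}=n_{\mathrm{sum}}\beta_{\psi\xi}$. Errors and Lyapunov functions. $\bm\psi_i=(\psi_{i1}^{i1},\dots,\psi_{i1}^{in_i},\psi_{i2}^{i1},\dots,\psi_{in_i}^{in_i})^T\in\mathbb{R}^{n_i^2}$, $\bar{\bm\psi}_i=\frac1{n_i}(\mathbf 1_{n_i}^T\otimes I_{n_i})\bm\psi_i$, $\bm e_{\psi_i}=\bm\psi_i-v_i\otimes\bar{\bm\psi}_i$. $\bar x_i=u_i^T\bm x_i/n_i$, $e_{\bar x_i}=\bar x_i-y_i^*$, $\bm e_{x_i}=\bm x_i-\mathbf 1_{n_i}\bar x_i$, $\bar{\bm X}=(\bar x_1\mathbf 1_{n_1}^T,\dots,\bar x_N\mathbf 1_{n_N}^T)^T$. $\bm\xi_i=(\bm\xi_{i1}^T,\dots,\bm\xi_{in_i}^T)^T$, $\bm e_{\xi_i}=\bm\xi_i-\mathbf 1_{n_i}\otimes\bar{\bm X}$. $\bm e_\psi,\bm e_{\bar x},\bm e_x,\bm e_\xi$: stacks over $i=1,\dots,N$. $V_\psi=\sum_i\bm e_{\psi_i}^T(W_{c_i}\otimes I_{n_i})\bm e_{\psi_i}$, $V_{\bar x}=\sum_i\frac{n_i^3}{\alpha u_i^Tv_i}e_{\bar x_i}^2$, $V_\xi=\bm e_\xi^TW_{\mathcal M}\bm e_\xi$, $V_x=\sum_i\bm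 e_{x_i}^TW_{R_i}\bm e_{x_i}$, each evaluated at time $k$. *)

(* Defs.v *)
From HB Require Import structures.
From mathcomp Require Import all_boot all_order all_algebra.
From mathcomp Require Import all_classical all_reals all_analysis.
From mathcomp Require Import mxtens.

Set Implicit Arguments.
Unset Strict Implicit.
Unset Printing Implicit Defensive.

Import Order.TTheory GRing.Theory Num.Theory numFieldNormedType.Exports.
Local Open Scope ring_scope.
Local Open Scope classical_set_scope.

Section LinAlg.
Variable R : realType.

Definition enorm m p (A : 'M[R]_(m, p)) : R :=
  Num.sqrt (\sum_(i < m) \sum_(j < p) A i j ^+ 2).

Definition specnorm m p (A : 'M[R]_(m, p)) : R :=
  sup [set enorm (A *m v) | v in [set v : 'cV[R]_p | enorm v = 1]].

Definition symmetric_mx m (W : 'M[R]_m) := W^T = W.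
Definition posdef_mx m (W : 'M[R]_m) :=
  forall v : 'cV[R]_m, v != 0 -> 0 < (v^T *m W *m v) 0 0.

Definition lyap_sol m (A W : 'M[R]_m) :=
  [/\ symmetric_mx W, posdef_mx W & A^T *m W *m A - W = - 1%:M].

Definition partialD p (f : 'rV[R]_p -> R) (r : 'I_p) (z : 'rV[R]_p) : R :=
  'D_(delta_mx 0 r) f z.

Definition gradient p (f : 'rV[R]_p -> R) (z : 'rV[R]_p) : 'rV[R]_p :=
  \row_r partialD f r z.

Definition convex_fun p (f : 'rV[R]_p -> R) :=
  forall (a b : 'rV[R]_p) (t : R), 0 <= t <= 1 ->
    f (t *: a + (1 - t) *: b) <= t * f a + (1 - t) * f b.

Definition C2_fun p (f : 'rV[R]_p -> R) :=
  [/\ forall z, differentiable f z,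
      forall r z, differentiable (partialD f r) z
    & forall r s, continuous (partialD (partialD f r) s)].

Definition lipschitz_gradient p (f : 'rV[R]_p -> R) (l : R) :=
  forall a b : 'rV[R]_p, enorm (gradient f a - gradient f b) <= l * enorm (a - b).

End LinAlg.

Definition strongly_connected (T : finType) (e : rel T) :=
  forall u v : T, connect e u v.

Section Game.
Variable R : realType.
Variable N : nat.
Variable n : 'I_N -> nat.

(* agent ij = (i, j), coalition i, j < n_i.  The enumeration of this
   sigma finType is lexicographic, so enum_rank is the lexicographic index. *)
Definition agent := {i : 'I_N & 'I_(n i)}.
HB.instance Definition _ := Finite.on agent.
Definition ag (i : 'I_N) (j : 'I_(n i)) : agent := existT _ i j.
Definition nsum := #|{: agent}|.
Definition aidx (a : agent) : 'I_nsum := enum_rank a.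
Definition agv (r : 'I_nsum) : agent := enum_val r.

(* Graph: E pq ij  means  (pq, ij) is an edge, i.e. ij receives from pq. *)
Variable E : rel agent.

Definition coal_rel (i : 'I_N) : rel 'I_(n i) := fun j m => E (ag j) (ag m).

Definition adj (a b : agent) : R := ((E b a) && (b != a))%:R.
Definition deg (a : agent) : R := \sum_b adj a b.
Definition lapl : 'M[R]_nsum :=
  \matrix_(r, c) (if r == c then deg (agv r) else - adj (agv r) (agv c)).

(* Gamma and A_d: diagonal, indexed by (ij, pq), ij outer *)
Definition Gam : 'M[R]_(nsum * nsum) :=
  diag_mx (\row_k (deg (agv (mxtens_unindex k).1)
                   + adj (agv (mxtens_unindex k).1) (agv (mxtens_unindex k).2))^-1).
Definition Adg : 'M[R]_(nsum * nsum) :=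
  diag_mx (\row_k adj (agv (mxtens_unindex k).1) (agv (mxtens_unindex k).2)).
Definition Hmx : 'M[R]_(nsum * nsum) := Gam *m (tensmx lapl (1%:M : 'M[R]_nsum) + Adg).

(* weights r_ij^im : R_i = [r_ij^im] (j row, m column) *)
Definition row_weights (i : 'I_N) (Rw : 'M[R]_(n i)) :=
  [/\ forall j m : 'I_(n i), (m == j) || E (ag m) (ag j) -> 0 < Rw j m,
      forall j m : 'I_(n i), ~~ ((m == j) || E (ag m) (ag j)) -> Rw j m = 0
    & forall j, \sum_m Rw j m = 1].

(* weights c_im^ij : C_i = [c_ij^im] (j row, m column), so c_im^ij = Cw m j *)
Definition col_weights (i : 'I_N) (Cw : 'M[R]_(n i)) :=
  [/\ forall j m : 'I_(n i), (m == j) || E (ag j) (ag m) -> 0 < Cw m j,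
      forall j m : 'I_(n i), ~~ ((m == j) || E (ag j) (ag m)) -> Cw m j = 0
    & forall j, \sum_m Cw m j = 1].

Definition agvec (g : agent -> R) : 'rV[R]_nsum := \row_r g (agv r).

(* Trajectory of the algorithm.
   x k ij = x_ij(k);  xi k ij pq = xi_ij^pq(k);  psi k i j l = psi_ij^il(k). *)
Definition trajectory (f : agent -> 'rV[R]_nsum -> R)
  (Rw Cw : forall i, 'M[R]_(n i)) (alpha : R)
  (x : nat -> agent -> R) (xi : nat -> agent -> agent -> R)
  (psi : nat -> forall i : 'I_N, 'I_(n i) -> 'I_(n i) -> R) :=
  [/\ forall i j l, psi 0%N i j l = partialD (f (ag j)) (aidx (ag l)) (agvec (xi 0%N (ag j))),
      forall k i j,
        x k.+1 (ag j) = \sum_m Rw i j m * x k (ag m)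
                        - alpha / (n i)%:R * \sum_m psi k i j m,
      forall k a p,
        xi k.+1 a p = xi k a p - (deg a + adj a p)^-1 *
          (\sum_b adj a b * (xi k a p - xi k b p) + adj a p * (xi k a p - x k p))
    & forall k i j l,
        psi k.+1 i j l = \sum_m Cw i j m * psi k i m l
          + partialD (f (ag j)) (aidx (ag l)) (agvec (xi k.+1 (ag j)))
          - partialD (f (ag j)) (aidx (ag l)) (agvec (xi k (ag j)))].

Definition left_perron (i : 'I_N) (Rw : 'M[R]_(n i)) (u : 'cV[R]_(n i)) :=
  u^T *m Rw = u^T /\ \sum_j u j 0 = (n i)%:R.
Definition right_perron (i : 'I_N) (Cw : 'M[R]_(n i)) (v : 'cV[R]_(n i)) :=
  Cw *m v = v /\ \sum_j v j 0 = (n i)%:R.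

Definition ones_row m : 'M[R]_(1, m) := const_mx 1.

Definition Cbar (i : 'I_N) (Cw : 'M[R]_(n i)) (v : 'cV[R]_(n i)) : 'M[R]_(n i) :=
  Cw - (n i)%:R^-1 *: (v *m ones_row (n i)).
Definition Ibar_v (i : 'I_N) (v : 'cV[R]_(n i)) : 'M[R]_(n i) :=
  1%:M - (n i)%:R^-1 *: (v *m ones_row (n i)).

Definition beta_psixi (Cw : forall i, 'M[R]_(n i)) (v : forall i, 'cV[R]_(n i))
  (Wc : forall i, 'M[R]_(n i)) (l : agent -> R) : R :=
  2 * (\big[Num.max/0]_(a : agent)
         ((2 * specnorm ((Cbar (Cw (tag a)) (v (tag a)))^T *m Wc (tag a)
                           *m Ibar_v (v (tag a))) ^+ 2
           + specnorm ((Ibar_v (v (tag a)))^T *m Wc (tag a) *m Ibar_v (v (tag a))))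
          * l a ^+ 2))
    * specnorm Hmx ^+ 2.
Definition beta_psix Cw v Wc l : R := nsum%:R * beta_psixi Cw v Wc l.

Section Errors.
Variable u v : forall i, 'cV[R]_(n i).

Definition xcoal (x : agent -> R) (i : 'I_N) : 'cV[R]_(n i) := \col_j x (ag j).
Definition xbar (x : agent -> R) (i : 'I_N) : R :=
  ((u i)^T *m xcoal x i) 0 0 / (n i)%:R.
Definition ex_sq (x : agent -> R) : R :=
  \sum_i enorm (xcoal x i - xbar x i *: const_mx 1) ^+ 2.
(* ||e_xi||^2 : e_{xi_i} = xi_i - 1 (x) \bar X, \bar X_pq = \bar x_p *)
Definition exi_sq (x : agent -> R) (xi : agent -> agent -> R) : R :=
  \sum_(a : agent) enorm (agvec (xi a) - agvec (fun b => xbar x (tag b))) ^+ 2.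

(* psi_i stacked: (psi_i1^i1, ..., psi_i1^in_i, psi_i2^i1, ...) *)
Definition psivec (ps : forall i : 'I_N, 'I_(n i) -> 'I_(n i) -> R) (i : 'I_N)
  : 'cV[R]_(n i * n i) :=
  \col_r ps i (mxtens_unindex r).1 (mxtens_unindex r).2.
Definition psibar ps (i : 'I_N) : 'cV[R]_(n i) :=
  castmx (mul1n (n i), erefl 1%N)
    ((n i)%:R^-1 *: ((tensmx (ones_row (n i)) (1%:M : 'M[R]_(n i))) *m psivec ps i)).
Definition epsi ps (i : 'I_N) : 'cV[R]_(n i * n i) :=
  psivec ps i - (tensmx (v i) (psibar ps i) : 'cV[R]_(n i * n i)).
Definition epsi_sq ps : R := \sum_i enorm (epsi ps i) ^+ 2.
Definition Vpsi (Wc : forall i, 'M[R]_(n i)) ps : R :=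
  \sum_i ((epsi ps i)^T *m (tensmx (Wc i) (1%:M : 'M[R]_(n i))) *m epsi ps i) 0 0.
End Errors.

End Game.
Arguments coal_rel {N n} E i.

(* Main.v *)
Require Import Defs.
From HB Require Import structures.
From mathcomp Require Import all_boot all_order all_algebra.
From mathcomp Require Import all_classical all_reals all_analysis.
From mathcomp Require Import mxtens.
From mathcomp Require Import ring lra.
Import Order.TTheory GRing.Theory Num.Theory numFieldNormedType.Exports.
Local Open Scope ring_scope.

Module Helpers.
Set Implicit Arguments.
Unset Strict Implicit.
Section Helpers.
Variable R : realType.

Lemma sqr_enorm m p (A : 'M[R]_(m,p)) : enorm A ^+ 2 = \sum_i \sum_j A i j ^+ 2.
Proof.
rewrite /enorm sqr_sqrtr // sumr_ge0 // => i _; apply: sumr_ge0 => j _.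
exact: sqr_ge0.
Qed.

Lemma enorm_ge0 m p (A : 'M[R]_(m,p)) : 0 <= enorm A.
Proof. exact: sqrtr_ge0. Qed.

Lemma sqr_enormc m (v : 'cV[R]_m) : enorm v ^+ 2 = \sum_i v i 0 ^+ 2.
Proof. by rewrite sqr_enorm; apply: eq_bigr => i _; rewrite big_ord1. Qed.

Lemma CS (I : finType) (a b : I -> R) :
  (\sum_i a i * b i) ^+ 2 <= (\sum_i a i ^+ 2) * (\sum_i b i ^+ 2).
Proof.
have E : \sum_i \sum_j (a i * b j - a j * b i) ^+ 2 =
  2 * ((\sum_i a i ^+ 2) * (\sum_i b i ^+ 2)) - 2 * (\sum_i a i * b i) ^+ 2.
  transitivity (\sum_i \sum_j (a i ^+ 2 * b j ^+ 2)
     + \sum_i \sum_j (a j ^+ 2 * b i ^+ 2)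
     - 2 * \sum_i \sum_j (a i * b i * (a j * b j))).
    rewrite mulr_sumr -big_split -sumrB; apply: eq_bigr => i _.
    rewrite mulr_sumr -big_split -sumrB; apply: eq_bigr => j _; simpl; ring.
  rewrite [X in _ + X - _]exchange_big /=.
  rewrite expr2 !big_distrlr /=; ring.
have : 0 <= \sum_i \sum_j (a i * b j - a j * b i) ^+ 2.
  by apply: sumr_ge0 => i _; apply: sumr_ge0 => j _; exact: sqr_ge0.
rewrite E; lra.
Qed.

Lemma sq_le (x y : R) : 0 <= y -> x ^+ 2 <= y ^+ 2 -> x <= y.
Proof.
move=> y0 h; apply: le_trans (ler_norm x) _.
rewrite -(ler_pXn2r (isT : (0 < 2)%N)) ?inE ?normr_ge0 //.
by rewrite real_normK ?num_real.
Qed.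

Lemma dot_le m (a b : 'cV[R]_m) :
  \sum_i a i 0 * b i 0 <= enorm a * enorm b.
Proof.
apply: sq_le; first by rewrite mulr_ge0 ?enorm_ge0.
by rewrite exprMn !sqr_enormc; exact: CS.
Qed.

Lemma dotE m (a b : 'cV[R]_m) : (a^T *m b) 0 0 = \sum_i a i 0 * b i 0.
Proof. by rewrite mxE; apply: eq_bigr => i _; rewrite mxE. Qed.

Lemma enorm_mul m p (A : 'M[R]_(m,p)) (v : 'cV[R]_p) :
  enorm (A *m v) <= enorm A * enorm v.
Proof.
apply: sq_le; first by rewrite mulr_ge0 ?enorm_ge0.
rewrite exprMn sqr_enormc sqr_enorm sqr_enormc mulr_suml.
apply: ler_sum => i _; rewrite mxE; exact: CS (fun k => A i k) (fun k => v k 0).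
Qed.

Lemma enormZ m p (c : R) (A : 'M[R]_(m,p)) : enorm (c *: A) = `|c| * enorm A.
Proof.
rewrite /enorm -sqrtr_sqr -sqrtrM ?sqr_ge0 // mulr_sumr.
congr Num.sqrt; apply: eq_bigr => i _; rewrite mulr_sumr; apply: eq_bigr => j _.
by rewrite mxE exprMn.
Qed.

Lemma spec_ub m p (A : 'M[R]_(m,p)) :
  has_ubound [set enorm (A *m v) | v in [set v : 'cV[R]_p | enorm v = 1]]%classic.
Proof.
exists (enorm A) => y [v /= Hv <-].
by have := enorm_mul A v; rewrite Hv mulr1.
Qed.

Lemma spec_bound m p (A : 'M[R]_(m,p)) (v : 'cV[R]_p) :
  enorm (A *m v) <= specnorm A * enorm v.
Proof.
have [H|H] := eqVneq (enorm v) 0.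
  by have := enorm_mul A v; rewrite H !mulr0.
have pos : 0 < enorm v by rewrite lt_def H enorm_ge0.
set c := (enorm v)^-1.
have Hc : enorm (c *: v) = 1 by rewrite enormZ ger0_norm ?invr_ge0 ?enorm_ge0 // mulVf.
have h := ub_le_sup (spec_ub A) (ex_intro2 _ _ (c *: v) Hc erefl).
rewrite -/(specnorm A) in h.
rewrite -scalemxAr enormZ ger0_norm ?invr_ge0 ?enorm_ge0 // in h.
by rewrite -ler_pdivrMr // mulrC.
Qed.

Lemma specnorm_ge0 m p (A : 'M[R]_(m,p)) : 0 <= specnorm A.
Proof.
rewrite /specnorm.
set S := ([set _ | _ in _])%classic.
have [[y Hy]|He] := pselect (exists y, S y).
  apply: le_trans (ub_le_sup (spec_ub A) Hy).
  by case: Hy => v _ <-; exact: enorm_ge0.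
rewrite (_ : S = set0) ?sup0 //; apply/seteqP; split => y // Hy.
by exfalso; apply: He; exists y.
Qed.

End Helpers.

Section H2.
Variable R : realType.

Lemma addE m n (A B : 'M[R]_(m,n)) i j : (A + B) i j = A i j + B i j.
Proof. by rewrite mxE. Qed.
Lemma oppE m n (A : 'M[R]_(m,n)) i j : (- A) i j = - A i j.
Proof. by rewrite mxE. Qed.
Lemma trE m n (A : 'M[R]_(m,n)) i j : A^T i j = A j i.
Proof. by rewrite mxE. Qed.

Definition qf m (W : 'M[R]_m) (x : 'cV[R]_m) := (x^T *m W *m x) 0 0.

Lemma lyap_step m (C I W : 'M[R]_m) (e d : 'cV[R]_m) :
  W^T = W -> C^T *m W *m C - W = - 1%:M ->
  qf W (C *m e + I *m d) - qf W e <=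
  - (1 / 2) * enorm e ^+ 2
  + (2 * specnorm (C^T *m W *m I) ^+ 2 + specnorm (I^T *m W *m I)) * enorm d ^+ 2.
Proof.
move=> WT Hl.
have HC : C^T *m W *m C = W - 1%:M.
  by rewrite -(subrK W (C^T *m W *m C)) Hl addrC.
set M := C^T *m W *m I; set Q := I^T *m W *m I.
have E : qf W (C *m e + I *m d) =
   qf W e - (e^T *m e) 0 0 + 2 * (e^T *m (M *m d)) 0 0 + (d^T *m (Q *m d)) 0 0.
  rewrite /qf [(_ + _)^T]linearD /= !mulmxDl !mulmxDr !trmx_mul.
  have T1 : (e^T *m C^T *m W *m (C *m e)) = e^T *m (W - 1%:M) *m e.
    by rewrite -HC !mulmxA.
  have T2 : (e^T *m C^T *m W *m (I *m d)) = e^T *m (M *m d) by rewrite !mulmxA.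
  have T3 : (d^T *m I^T *m W *m (C *m e)) = (e^T *m (M *m d))^T.
    by rewrite /M !trmx_mul !trmxK WT !mulmxA.
  have T4 : (d^T *m I^T *m W *m (I *m d)) = d^T *m (Q *m d) by rewrite !mulmxA.
  rewrite T1 T2 T3 T4 mulmxDr mulmxDl mulmxN mulmx1 !addE. rewrite mulNmx oppE trE; ring.
rewrite E.
have h1 : (d^T *m (Q *m d)) 0 0 <= specnorm Q * enorm d ^+ 2.
  rewrite dotE; apply: le_trans (dot_le _ _) _.
  rewrite mulrC expr2 mulrA ler_wpM2r ?enorm_ge0 //.
  exact: spec_bound.
have h2 : 2 * (e^T *m (M *m d)) 0 0 <= (1/2) * enorm e ^+ 2 + 2 * enorm (M *m d) ^+ 2.
  rewrite dotE !sqr_enormc mulr_sumr mulr_sumr mulr_sumr -big_split /=.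
  apply: ler_sum => i _.
  have := sqr_ge0 (e i 0 - 2 * (M *m d) i 0); nra.
have h3 : enorm (M *m d) ^+ 2 <= specnorm M ^+ 2 * enorm d ^+ 2.
  rewrite -exprMn ler_pXn2r ?nnegrE ?mulr_ge0 ?enorm_ge0 ?specnorm_ge0 //.
  exact: spec_bound.
have h4 : (e^T *m e) 0 0 = enorm e ^+ 2 by rewrite dotE sqr_enormc; apply: eq_bigr => i _; rewrite expr2.
rewrite h4; nra.
Qed.
End H2.

Section H3.
Variable R : realType.

Lemma sum_tens m p (F : 'I_(m * p) -> R) :
  \sum_k F k = \sum_i \sum_j F (mxtens_index (i,j)).
Proof.
rewrite pair_big /= (reindex (@mxtens_index m p)) /=.
  by apply: eq_bigr => -[i j].
by exists (@mxtens_unindex m p) => x _; [exact: mxtens_indexK|exact: mxtens_unindexK].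
Qed.

Lemma sum_delta m (l : 'I_m) (X : 'I_m -> R) :
  \sum_k (l == k)%:R * X k = X l.
Proof.
rewrite (bigD1 l) //= eqxx mul1r big1 ?addr0 // => k /negbTE.
by rewrite eq_sym => ->; rewrite mul0r.
Qed.

Lemma sum_delta' m (l : 'I_m) (X : 'I_m -> R) :
  \sum_k X k * (k == l)%:R = X l.
Proof.
rewrite -(sum_delta l X); apply: eq_bigr => k _; rewrite mulrC eq_sym //.
Qed.

Definition Ef m (v : 'cV[R]_m) (P : 'I_m -> 'I_m -> R) (l : 'I_m) : 'cV[R]_m :=
  \col_j (P j l - v j 0 * (m%:R^-1 * \sum_k P k l)).

Lemma Ef_step m (C : 'M[R]_m) (v : 'cV[R]_m) (P P' D : 'I_m -> 'I_m -> R) l :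
  (0 < m)%N ->
  C *m v = v -> \sum_j v j 0 = m%:R -> (forall j, \sum_k C k j = 1) ->
  (forall j l, P' j l = \sum_k C j k * P k l + D j l) ->
  Ef v P' l = (C - m%:R^-1 *: (v *m const_mx 1)) *m Ef v P l
              + (1%:M - m%:R^-1 *: (v *m const_mx 1)) *m \col_j D j l.
Proof.
move=> m0 Cv sv sC HP; apply/matrixP => j z; rewrite (ord1 z) {z}.
have mn : m%:R != 0 :> R by rewrite pnatr_eq0 -lt0n.
have SP' : \sum_k P' k l = \sum_k P k l + \sum_k D k l.
  under eq_bigr do rewrite HP.
  rewrite big_split /= exchange_big /=; congr (_ + _).
  by apply: eq_bigr => k _; rewrite -mulr_suml sC mul1r.
have Cvj : \sum_k C j k * v k 0 = v j 0.
  by have := congr1 (fun M : 'cV[R]_m => M j 0) Cv; rewrite mxE.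
set SP := \sum_k P k l; set SD := \sum_k D k l.
rewrite !mxE SP' HP.
have E1 : \sum_k (C - m%:R^-1 *: (v *m const_mx 1)) j k * Ef v P l k 0 =
   \sum_k C j k * P k l - (m%:R^-1 * SP) * (\sum_k C j k * v k 0)
   - m%:R^-1 * v j 0 * SP + m%:R^-1 * v j 0 * (m%:R^-1 * SP) * \sum_k v k 0.
  rewrite (eq_bigr (fun k => C j k * P k l - (m%:R^-1 * SP) * (C j k * v k 0)
     - m%:R^-1 * v j 0 * P k l + m%:R^-1 * v j 0 * (m%:R^-1 * SP) * v k 0)); last first.
    move=> k _; rewrite !mxE big_ord1 !mxE -/SP; change (v j ord0) with (v j 0); ring.
  by rewrite big_split sumrB sumrB /= -!mulr_sumr.
have E2 : \sum_k (1%:M - m%:R^-1 *: (v *m const_mx 1)) j k * (\col_j D j l) k 0 =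
   D j l - m%:R^-1 * v j 0 * SD.
  rewrite -(sum_delta j (fun k => D k l)) mulr_sumr -sumrB; apply: eq_bigr => k _.
  rewrite !mxE big_ord1 !mxE; change (v j ord0) with (v j 0); ring.
rewrite E1 E2 Cvj sv; rewrite -/SP -/SD; field.
by [].
Qed.


Lemma coal_ineq m (C W : 'M[R]_m) (v : 'cV[R]_m) (P P' D : 'I_m -> 'I_m -> R) :
  (0 < m)%N ->
  C *m v = v -> \sum_j v j 0 = m%:R -> (forall j, \sum_k C k j = 1) ->
  (forall j l, P' j l = \sum_k C j k * P k l + D j l) ->
  W^T = W ->
  (C - m%:R^-1 *: (v *m const_mx 1))^T *m W *m (C - m%:R^-1 *: (v *m const_mx 1)) - W
    = - 1%:M ->
  \sum_l qf W (Ef v P' l) - \sum_l qf W (Ef v P l) <=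
  - (1/2) * \sum_l enorm (Ef v P l) ^+ 2
  + (2 * specnorm ((C - m%:R^-1 *: (v *m const_mx 1))^T *m W
                   *m (1%:M - m%:R^-1 *: (v *m const_mx 1))) ^+ 2
     + specnorm ((1%:M - m%:R^-1 *: (v *m const_mx 1))^T *m W
                   *m (1%:M - m%:R^-1 *: (v *m const_mx 1))))
    * \sum_l \sum_j D j l ^+ 2.
Proof.
move=> m0 Cv sv sC HP WT HL.
rewrite -sumrB !mulr_sumr -big_split /=; apply: ler_sum => l _.
rewrite (Ef_step l m0 Cv sv sC HP).
have := lyap_step (1%:M - m%:R^-1 *: (v *m const_mx 1)) (Ef v P l) (\col_j D j l) WT HL.
have hd : enorm (\col_j D j l) ^+ 2 = \sum_j D j l ^+ 2.
  by rewrite sqr_enormc; apply: eq_bigr => j _; rewrite mxE.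
by rewrite hd sqr_enormc.
Qed.

Lemma quad_tens m (W : 'M[R]_m) (e : 'cV[R]_(m * m)) (G : 'I_m -> 'cV[R]_m) :
  (forall j l, e (mxtens_index (j, l)) 0 = G l j 0) ->
  ((e^T *m tensmx W 1%:M) *m e) 0 0 = \sum_l qf W (G l).
Proof.
move=> He; rewrite mxE sum_tens.
rewrite exchange_big /=; apply: eq_bigr => l _.
rewrite /qf mxE; apply: eq_bigr => j _.
rewrite He mxE sum_tens exchange_big /= (bigD1 l) //= [X in _ + X]big1 ?addr0.
  rewrite [in RHS]mxE; congr (_ * _); apply: eq_bigr => k _.
  by rewrite trE He tensmxE trE mxE eqxx mulr1.
move=> l' /negbTE nl; rewrite big1 // => k _.
by rewrite tensmxE trE [1%:M _ _]mxE nl mulr0 mulr0.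
Qed.

Lemma norm_tens m (e : 'cV[R]_(m * m)) (G : 'I_m -> 'cV[R]_m) :
  (forall j l, e (mxtens_index (j, l)) 0 = G l j 0) ->
  enorm e ^+ 2 = \sum_l enorm (G l) ^+ 2.
Proof.
move=> He; rewrite sqr_enormc sum_tens exchange_big /=; apply: eq_bigr => l _.
by rewrite sqr_enormc; apply: eq_bigr => j _; rewrite He.
Qed.

End H3.

Section H4.
Variable R : realType.
Variable N : nat.
Variable n : 'I_N -> nat.

Lemma psibarE (ps : forall i : 'I_N, 'I_(n i) -> 'I_(n i) -> R) i l :
  psibar ps i l 0 = (n i)%:R^-1 * \sum_j ps i j l.
Proof.
rewrite /psibar castmxE mxE mxE.
have -> : cast_ord (esym (mul1n (n i))) l = mxtens_index (ord0, l).
  by apply: val_inj; rewrite /= mul0n add0n.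
congr (_ * _); rewrite sum_tens exchange_big /=.
rewrite (bigD1 l) //= [X in _ + X]big1 ?addr0.
  apply: eq_bigr => j _.
  by rewrite tensmxE /ones_row /psivec !mxE mxtens_indexK /= eqxx mul1r mul1r.
move=> l' /negbTE nl; rewrite big1 // => j _.
by rewrite tensmxE [1%:M _ _]mxE eq_sym nl mulr0 mul0r.
Qed.

Lemma epsiE (v : forall i, 'cV[R]_(n i)) (ps : forall i : 'I_N, 'I_(n i) -> 'I_(n i) -> R) i j l :
  epsi v ps i (mxtens_index (j, l)) 0 = Ef (v i) (ps i) l j 0.
Proof.
rewrite /epsi /Ef !mxE mxtens_indexK /= -psibarE.
by congr (_ - v i j _ * psibar ps i l _); apply: val_inj.
Qed.



Lemma Vpsi_E (v : forall i, 'cV[R]_(n i)) (Wc : forall i, 'M[R]_(n i))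
  (ps : forall i : 'I_N, 'I_(n i) -> 'I_(n i) -> R) :
  Vpsi v Wc ps = \sum_i \sum_l qf (Wc i) (Ef (v i) (ps i) l).
Proof. by apply: eq_bigr => i _; apply: quad_tens => j l; exact: epsiE. Qed.

Lemma epsi_sqE (v : forall i, 'cV[R]_(n i))
  (ps : forall i : 'I_N, 'I_(n i) -> 'I_(n i) -> R) :
  epsi_sq v ps = \sum_i \sum_l enorm (Ef (v i) (ps i) l) ^+ 2.
Proof. by apply: eq_bigr => i _; apply: norm_tens => j l; exact: epsiE. Qed.

Definition cco (Cw : forall i, 'M[R]_(n i)) (v : forall i, 'cV[R]_(n i))
  (Wc : forall i, 'M[R]_(n i)) i : R :=
  2 * specnorm ((Cbar (Cw i) (v i))^T *m Wc i *m Ibar_v (v i)) ^+ 2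
  + specnorm ((Ibar_v (v i))^T *m Wc i *m Ibar_v (v i)).

Lemma cco_ge0 Cw v Wc i : 0 <= cco Cw v Wc i.
Proof. by rewrite /cco addr_ge0 ?mulr_ge0 ?exprn_ge0 ?specnorm_ge0. Qed.

Lemma psi_step (E : rel (agent n)) (Cw : forall i, 'M[R]_(n i)) (v : forall i, 'cV[R]_(n i))
  (Wc : forall i, 'M[R]_(n i)) (ps ps' D : forall i : 'I_N, 'I_(n i) -> 'I_(n i) -> R) :
  (forall i, (0 < n i)%N) ->
  (forall i, col_weights E (Cw i)) -> (forall i, right_perron (Cw i) (v i)) ->
  (forall i, lyap_sol (Cbar (Cw i) (v i)) (Wc i)) ->
  (forall i j l, ps' i j l = \sum_m Cw i j m * ps i m l + D i j l) ->
  Vpsi v Wc ps' - Vpsi v Wc ps <=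
  - (1/2) * epsi_sq v ps + \sum_i cco Cw v Wc i * \sum_l \sum_j D i j l ^+ 2.
Proof.
move=> n0 cw rp ly HP.
rewrite !Vpsi_E epsi_sqE -sumrB mulr_sumr -big_split /=; apply: ler_sum => i _.
have [_ _ sC] := cw i; have [Cv sv] := rp i; have [WT _ HL] := ly i.
exact: (coal_ineq (n0 i) Cv sv sC (HP i) WT HL).
Qed.

End H4.

Section H5.
Variable R : realType.
Variable N : nat.
Variable n : 'I_N -> nat.

Lemma sum_agent (G : agent n -> R) : \sum_a G a = \sum_(i < N) \sum_(j < n i) G (ag j).
Proof.
rewrite (@sig_big_dep _ _ _ _ (fun i => ordinal (n i)) xpredT (fun _ _ => true) (fun i (j : ordinal (n i)) => G (ag j))) /=.
by apply: eq_bigr => -[i j].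
Qed.

Lemma sum_agv (G : agent n -> R) : \sum_(r < nsum n) G (agv r) = \sum_a G a.
Proof.
rewrite [RHS](reindex (@agv _ _)) //.
by exists (@aidx _ _) => x _; [exact: enum_valK|exact: enum_rankK].
Qed.

Lemma sqr_enorm_agvec (g : agent n -> R) : enorm (agvec g) ^+ 2 = \sum_a g a ^+ 2.
Proof.
by rewrite sqr_enorm big_ord1 -sum_agv; apply: eq_bigr => r _; rewrite mxE.
Qed.

Lemma ag_inj i : injective (@ag N n i).
Proof. by move=> j j' H; exact: (existT_inj2 H). Qed.

Lemma sub_sum_coal i (g : 'rV[R]_(nsum n)) :
  \sum_(l : 'I_(n i)) g 0 (aidx (ag l)) ^+ 2 <= enorm g ^+ 2.
Proof.
rewrite sqr_enorm big_ord1.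
have inj : {in [pred l : 'I_(n i) | true] &, injective (fun l => aidx (ag l))}.
  by move=> x y _ _ /enum_rank_inj /ag_inj.
rewrite -(big_imset (fun r => g 0 r ^+ 2) inj) /= big_mkcond /=.
by apply: ler_sum => r _; case: ifP => // _; exact: sqr_ge0.
Qed.


Lemma D_bound (f : 'rV[R]_(nsum n) -> R) (L : R) (z z' : 'rV[R]_(nsum n)) i :
  lipschitz_gradient f L ->
  \sum_(l : 'I_(n i)) (partialD f (aidx (ag l)) z' - partialD f (aidx (ag l)) z) ^+ 2
  <= L ^+ 2 * enorm (z' - z) ^+ 2.
Proof.
move=> Lf; have := sub_sum_coal i (gradient f z' - gradient f z).
under eq_bigr do rewrite !mxE.
move=> /le_trans; apply; rewrite -exprMn ler_pXn2r ?nnegrE ?enorm_ge0 //.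
all: try exact: Lf.
exact: le_trans (enorm_ge0 _) (Lf z' z).
Qed.

Variable E : rel (agent n).
Local Notation adj := (adj R E).
Local Notation deg := (deg R E).
Definition gam (a p : agent n) : R := (deg a + adj a p)^-1.

Lemma adj_ge0 a p : 0 <= adj a p.
Proof. by rewrite /adj ler0n. Qed.
Lemma deg_ge0 a : 0 <= deg a.
Proof. by apply: sumr_ge0 => b _; exact: adj_ge0. Qed.
Lemma adj01 a p : adj a p = 0 \/ adj a p = 1.
Proof. by rewrite /adj; case: (_ && _); [right|left]. Qed.
Lemma adj_le_deg a p : adj a p <= deg a.
Proof.
rewrite /deg (bigD1 p) //= lerDl; apply: sumr_ge0 => b _; exact: adj_ge0.
Qed.
Lemma adjaa a : adj a a = 0.
Proof. by rewrite /adj eqxx andbF. Qed.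

Lemma lapl_entry r r' :
  lapl R E r r' = (r == r')%:R * deg (agv r) - adj (agv r) (agv r').
Proof.
rewrite mxE; case: eqVneq => [->|_]; first by rewrite adjaa mul1r subr0.
by rewrite mul0r sub0r.
Qed.

Lemma H_entry (V : 'cV[R]_(nsum n * nsum n)) r s :
  (Hmx R E *m V) (mxtens_index (r, s)) 0 = gam (agv r) (agv s) *
    (\sum_r' lapl R E r r' * V (mxtens_index (r', s)) 0
     + adj (agv r) (agv s) * V (mxtens_index (r, s)) 0).
Proof.
rewrite /Hmx -mulmxA /Gam mul_diag_mx mxE mxE mxtens_indexK /=; congr (_ * _).
rewrite mulmxDl /Adg mul_diag_mx !mxE mxtens_indexK /=; congr (_ + _).
rewrite sum_tens; apply: eq_bigr => r' _.
rewrite (eq_bigr (fun s' => (lapl R E r r' * V (mxtens_index (r', s')) 0) * (s' == s)%:R)).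
  by rewrite sum_delta'.
by move=> s' _; rewrite tensmxE [1%:M _ _]mxE eq_sym; ring.
Qed.


Definition Xe (u : forall i, 'cV[R]_(n i)) (x : agent n -> R) (X : agent n -> agent n -> R)
  : 'cV[R]_(nsum n * nsum n) :=
  \col_K (X (agv (mxtens_unindex K).1) (agv (mxtens_unindex K).2)
          - xbar u x (tag (agv (mxtens_unindex K).2))).
Definition dXv (X X' : agent n -> agent n -> R) : 'cV[R]_(nsum n * nsum n) :=
  \col_K (X' (agv (mxtens_unindex K).1) (agv (mxtens_unindex K).2)
          - X (agv (mxtens_unindex K).1) (agv (mxtens_unindex K).2)).
Definition wv (u : forall i, 'cV[R]_(n i)) (x : agent n -> R) : 'cV[R]_(nsum n * nsum n) :=
  \col_K (gam (agv (mxtens_unindex K).1) (agv (mxtens_unindex K).2)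
          * adj (agv (mxtens_unindex K).1) (agv (mxtens_unindex K).2)
          * (x (agv (mxtens_unindex K).2) - xbar u x (tag (agv (mxtens_unindex K).2)))).

Lemma dX_eq u x (X X' : agent n -> agent n -> R) :
  (forall a p, X' a p = X a p - (deg a + adj a p)^-1 *
     (\sum_b adj a b * (X a p - X b p) + adj a p * (X a p - x p))) ->
  dXv X X' = - (Hmx R E *m Xe u x X) + wv u x.
Proof.
move=> HX; apply/matrixP => K z; rewrite (ord1 z) {z}.
case: (mxtens_indexP K) => r s.
rewrite addE oppE H_entry /dXv /wv !mxE !mxtens_indexK /=.
rewrite (eq_bigr (fun r' => lapl R E r r' * (X (agv r') (agv s) - xbar u x (tag (agv s))))); last by move=> r' _; rewrite /Xe [(\col__ _) _ _]mxE mxtens_indexK.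
set a := agv r; set p := agv s; set c := xbar u x (tag p).
have S1 : \sum_r' lapl R E r r' * (X (agv r') p - c) = \sum_b adj a b * (X a p - X b p).
  rewrite -sum_agv.
  transitivity (\sum_r' ((r == r')%:R * (deg a * (X (agv r') p - c))
                    - adj a (agv r') * (X (agv r') p - c))).
    by apply: eq_bigr => r' _; rewrite lapl_entry; ring.
  rewrite sumrB sum_delta /deg -sum_agv mulr_suml -sumrB; apply: eq_bigr => r' _; ring.
rewrite S1 HX /gam; ring.
Qed.


Lemma sqr_Xe u x X : enorm (Xe u x X) ^+ 2 = exi_sq u x X.
Proof.
rewrite sqr_enormc sum_tens /exi_sq -sum_agv; apply: eq_bigr => r _.
rewrite sqr_enorm big_ord1; apply: eq_bigr => s _.
by rewrite !mxE mxtens_indexK.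
Qed.

Lemma sqr_dX (X X' : agent n -> agent n -> R) :
  enorm (dXv X X') ^+ 2 = \sum_a enorm (agvec (X' a) - agvec (X a)) ^+ 2.
Proof.
rewrite sqr_enormc sum_tens -sum_agv; apply: eq_bigr => r _.
rewrite sqr_enorm big_ord1; apply: eq_bigr => s _.
by rewrite !mxE mxtens_indexK.
Qed.

Lemma ex_sqE u (x : agent n -> R) : ex_sq u x = \sum_(p : agent n) (x p - xbar u x (tag p)) ^+ 2.
Proof.
rewrite sum_agent; apply: eq_bigr => i _.
rewrite sqr_enormc; apply: eq_bigr => j _.
by rewrite !mxE mulr1.
Qed.

Lemma gam_adj a p : (gam a p * adj a p) ^+ 2 <= 1.
Proof.
rewrite /gam; case: (adj01 a p) => ->; first by rewrite mulr0 expr0n ler01.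
have d0 := deg_ge0 a.
rewrite mulr1 expr2 -invfM invf_le1 ?mulr_gt0 //; try lra.
nra.
Qed.

Lemma sqr_w u x : enorm (wv u x) ^+ 2 <= (nsum n)%:R * ex_sq u x.
Proof.
rewrite sqr_enormc sum_tens ex_sqE -sum_agv.
apply: (@le_trans _ _ (\sum_(r < nsum n) \sum_(s < nsum n)
   (x (agv s) - xbar u x (tag (agv s))) ^+ 2)).
  apply: ler_sum => r _; apply: ler_sum => s _.
  rewrite !mxE mxtens_indexK /= exprMn.
  apply: ler_piMl; first exact: sqr_ge0.
  exact: gam_adj.
by rewrite sumr_const card_ord mulr_natl.
Qed.


Lemma S_ge1 a p : adj a p = 1 -> 1 <= specnorm (Hmx R E) ^+ 2.
Proof.
move=> Ha.
set K := mxtens_index (aidx a, aidx p).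
set dv : 'cV[R]_(nsum n * nsum n) := delta_mx K 0.
have HKK : (Hmx R E *m dv) K 0 = 1.
  rewrite /K H_entry.
  rewrite (bigD1 (aidx a)) //= [\sum_(i < _ | i != _) _]big1; last first.
    move=> r' nr; rewrite /dv [delta_mx _ _ _ _]mxE /K (can_eq (@mxtens_indexK _ _)) xpair_eqE eqxx andbT.
    by rewrite (negbTE nr) mulr0.
  rewrite /dv [delta_mx _ _ _ _]mxE !eqxx /=. rewrite lapl_entry eqxx /agv /aidx !enum_rankK adjaa Ha /gam Ha subr0 !mulr1 mul1r addr0 mulVf //.
  by apply/lt0r_neq0; have := deg_ge0 a; lra.
have nv : enorm dv = 1.
  rewrite /enorm (eq_bigr (fun i => 1 * (i == K)%:R)) ?sum_delta' ?sqrtr1 //.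
  move=> i _; rewrite big_ord1 /dv mxE andbT mul1r.
  by case: (i == K); rewrite ?expr1n ?expr0n.
have h1 : 1 <= enorm (Hmx R E *m dv) ^+ 2.
  rewrite sqr_enormc (bigD1 K) //= HKK expr1n lerDl.
  by apply: sumr_ge0 => i _; exact: sqr_ge0.
have := spec_bound (Hmx R E) dv; rewrite nv mulr1 => h.
apply: le_trans h1 _; rewrite ler_pXn2r ?nnegrE ?enorm_ge0 ?specnorm_ge0 //.
Qed.

Lemma ex_sq_ge0 u (x : agent n -> R) : 0 <= ex_sq u x.
Proof. by rewrite ex_sqE; apply: sumr_ge0 => p _; exact: sqr_ge0. Qed.

Lemma w_bound u (x : agent n -> R) : enorm (wv u x) ^+ 2 <= (nsum n)%:R * specnorm (Hmx R E) ^+ 2 * ex_sq u x.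
Proof.
have [[a [p Ha]]|Hn] := pselect (exists a p, adj a p = 1).
  apply: le_trans (sqr_w u x) _.
  rewrite (mulrAC _ (specnorm _ ^+ 2)) -[X in X <= _]mul1r.
  rewrite [X in _ <= X]mulrC; apply: ler_wpM2r; [by rewrite mulr_ge0 ?ler0n ?ex_sq_ge0|exact: S_ge1 Ha].
have -> : wv u x = 0.
  apply/matrixP => K z; rewrite !mxE.
  case: (adj01 (agv (mxtens_unindex K).1) (agv (mxtens_unindex K).2)) => [->|H].
    by rewrite mulr0 mul0r.
  by exfalso; apply: Hn; do 2 eexists; exact: H.
rewrite sqr_enormc big1 ?mulr_ge0 ?ex_sq_ge0 ?exprn_ge0 ?ler0n ?specnorm_ge0 //.
by move=> i _; rewrite mxE expr0n.
Qed.

Lemma xi_bound u x (X X' : agent n -> agent n -> R) :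
  (forall a p, X' a p = X a p - (deg a + adj a p)^-1 *
     (\sum_b adj a b * (X a p - X b p) + adj a p * (X a p - x p))) ->
  \sum_a enorm (agvec (X' a) - agvec (X a)) ^+ 2 <=
  2 * specnorm (Hmx R E) ^+ 2 * exi_sq u x X
  + 2 * ((nsum n)%:R * specnorm (Hmx R E) ^+ 2) * ex_sq u x.
Proof.
move=> HX; rewrite -sqr_dX (dX_eq u HX).
set A := Hmx R E *m Xe u x X; set w := wv u x.
have h1 : enorm (- A + w) ^+ 2 <= 2 * enorm A ^+ 2 + 2 * enorm w ^+ 2.
  rewrite !sqr_enormc !mulr_sumr -big_split /=; apply: ler_sum => i _.
  rewrite addE oppE; have := sqr_ge0 (A i 0 + w i 0); nra.
have h2 : enorm A ^+ 2 <= specnorm (Hmx R E) ^+ 2 * exi_sq u x X.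
  rewrite -sqr_Xe -exprMn ler_pXn2r ?nnegrE ?mulr_ge0 ?enorm_ge0 ?specnorm_ge0 //.
  exact: spec_bound.
have h3 := w_bound u x.
rewrite mulrA in h3.
apply: le_trans h1 _; lra.
Qed.

End H5.

End Helpers.
Import Helpers.

Theorem lemma1 (R : realType) (N : nat) (n : 'I_N -> nat)
  (E : rel (agent n))
  (f : agent n -> 'rV[R]_(nsum n) -> R) (l : agent n -> R)
  (Rw Cw : forall i, 'M[R]_(n i)) (alpha : R)
  (u v : forall i, 'cV[R]_(n i)) (Wc : forall i, 'M[R]_(n i))
  (x : nat -> agent n -> R) (xi : nat -> agent n -> agent n -> R)
  (psi : nat -> forall i : 'I_N, 'I_(n i) -> 'I_(n i) -> R) :
  (forall i, (0 < n i)%N) ->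
  (* (A1) *)
  strongly_connected E -> (forall i, strongly_connected (coal_rel E i)) ->
  (* (A2) *)
  (forall a, [/\ convex_fun (f a), C2_fun (f a) & lipschitz_gradient (f a) (l a)]) ->
  (* weights, step size *)
  (forall i, row_weights E (Rw i)) -> (forall i, col_weights E (Cw i)) ->
  0 < alpha ->
  (* auxiliary quantities *)
  (forall i, left_perron (Rw i) (u i)) -> (forall i, right_perron (Cw i) (v i)) ->
  (forall i, lyap_sol (Cbar (Cw i) (v i)) (Wc i)) ->
  (* trajectory of the algorithm *)
  trajectory E f Rw Cw alpha x xi psi ->
  forall k : nat,
    Vpsi v Wc (psi k.+1) - Vpsi v Wc (psi k)
    <= - (1 / 2) * epsi_sq v (psi k)
       + beta_psixi E Cw v Wc l * exi_sq u (x k) (xi k)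
       + beta_psix E Cw v Wc l * ex_sq u (x k).
Proof.
move=> n0 _ _ A2 _ cw _ _ rp ly [_ _ Hxi Hpsi] k.
pose D := fun i (j m : 'I_(n i)) =>
  partialD (f (ag j)) (aidx (ag m)) (agvec (xi k.+1 (ag j)))
  - partialD (f (ag j)) (aidx (ag m)) (agvec (xi k (ag j))).
have HP : forall i j m, psi k.+1 i j m = \sum_m' Cw i j m' * psi k i m' m + D i j m.
  by move=> i j m; rewrite Hpsi addrA.
have h1 := psi_step n0 cw rp ly HP.
set B := \big[Num.max/0]_(a : agent n)
         ((2 * specnorm ((Cbar (Cw (tag a)) (v (tag a)))^T *m Wc (tag a)
                           *m Ibar_v (v (tag a))) ^+ 2
           + specnorm ((Ibar_v (v (tag a)))^T *m Wc (tag a) *m Ibar_v (v (tag a))))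
          * l a ^+ 2).
have B0 : 0 <= B by exact: bigmax_ge_id.
set Y := \sum_a enorm (agvec (xi k.+1 a) - agvec (xi k a)) ^+ 2.
have h2 : \sum_i cco Cw v Wc i * \sum_m \sum_j D i j m ^+ 2 <= B * Y.
  rewrite /Y sum_agent mulr_sumr; apply: ler_sum => i _.
  rewrite exchange_big !mulr_sumr; apply: ler_sum => j _ /=.
  have [_ _ Lf] := A2 (ag j).
  rewrite /D; apply: le_trans (ler_wpM2l (cco_ge0 Cw v Wc i) (D_bound (agvec (xi k (ag j))) (agvec (xi k.+1 (ag j))) i Lf)) _.
  rewrite mulrA; apply: ler_wpM2r; first exact: exprn_ge0 (enorm_ge0 _).
  exact: (le_bigmax _ _ (ag j)).
have h3 := xi_bound u (Hxi k).
have h4 := ler_wpM2l B0 h3.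
rewrite /beta_psix /beta_psixi -/B.
set S := specnorm (Hmx R E) ^+ 2.
rewrite -/S in h4.
set ex := ex_sq u (x k); set exi := exi_sq u (x k) (xi k).
rewrite -/ex -/exi -/Y in h4.
have e1 : B * (2 * S * exi + 2 * ((nsum n)%:R * S) * ex)
        = 2 * B * S * exi + (nsum n)%:R * (2 * B * S) * ex by ring.
rewrite e1 in h4.
lra.
Qed.
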